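(* If $d: t\to_y^* u$ then $t\to_{y\neg gcv}^{k}\to_{ygcv}^{h} u$ where $k$ is the number of $\to_{y\neg gcv}$ steps in $d$ and $h$ is the number of $\to_{ygcv}$ steps in $d$.
   Context: Terms: $t ::= x \mid \lambda x.t \mid t\,u \mid t[x\backslash u]$ ($t[x\backslash u]$ an explicit substitution binding $x$ in $t$; terms up to $\alpha$). Values $v ::= \lambda x.t$. Substitution contexts $S ::= \langle\cdot\rangle\mid S[x\backslash u]$. For a class of contexts $K$, $K\langle\langle t\rangle\rangle$ is plugging without capture of free variables of $t$. Root rules: $S\langle\lambda x.t\rangle u\mapsto_m S\langle t[x\backslash u]\rangle$; $K\langle\langle x\rangle\rangle[x\backslash u]\mapsto_{e_K} K\langle\langle u\rangle\rangle[x\backslash u]$; $t[x\backslash S\langle v\rangle]\mapsto_{gcv} S\langle t\rangle$ if $x\notin\mathrm{fv}(t)$. Answers $a ::= v\mid a[x\backslash a']$; name contexts $N ::= \langle\cdot\rangle\mid N t\mid N[x\backslash t]$; auxiliary contexts $A ::= \langle\cdot\rangle\mid a[x\backslash A]\mid A[x\backslash t]$; silly contexts $Y ::= A\langle N\rangle$. $\to_{ym} := Y\langle\mapsto_m\rangle$; $\to_{yeAY} := A\langle\mapsto_{e_Y}\rangle$; $\to_{yeYN} := Y\langle\mapsto_{e_N}\rangle$; $\to_{ygcv}:=Y\langle\mapsto_{gcv}\rangle$; $\to_{y\neg gcv}:=\to_{ym}\cup\to_{yeAY}\cup\to_{yeYN}$; $\to_y := \to_{y\neg gcv}\cup\to_{ygcv}$.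 *)

(* Defs.v *)
(* Terms of the lambda calculus with explicit substitutions,
   represented with de Bruijn indices (terms are thus taken up to alpha). *)
From Stdlib Require Import Arith Bool.

Inductive term : Type :=
| Var : nat -> term
| Lam : term -> term
| App : term -> term -> term
| Es  : term -> term -> term.       (* t[x\u] : binds index 0 in t, not in u *)

Fixpoint lift (d c : nat) (t : term) : term :=
  match t with
  | Var n => if n <? c then Var n else Var (n + d)
  | Lam t => Lam (lift d (S c) t)
  | App t u => App (lift d c t) (lift d c u)
  | Es t u => Es (lift d (S c) t) (lift d c u)
  end.

Fixpoint free (k : nat) (t : term) : bool :=
  match t with
  | Var n => n =? k
  | Lam t => free (S k) t
  | App t u => free k t || free k u
  | Es t u => free (S k) t || free k u
  end.

(* down c t : remove the (unused) index c, decrementing free indices > c *)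
Fixpoint down (c : nat) (t : term) : term :=
  match t with
  | Var n => if n <=? c then Var n else Var (n - 1)
  | Lam t => Lam (down (S c) t)
  | App t u => App (down c t) (down c u)
  | Es t u => Es (down (S c) t) (down c u)
  end.

Definition is_value (t : term) : Prop := exists b, t = Lam b.

(* One-hole contexts (only the shapes needed by S, N, A, Y) *)
Inductive ctx : Type :=
| Hole : ctx
| CAppL : ctx -> term -> ctx
| CEsL : ctx -> term -> ctx        (* C[x\u]  (hole under the binder x) *)
| CEsR : term -> ctx -> ctx.       (* t[x\C]  (hole not under x) *)

(* ordinary plugging (may capture) *)
Fixpoint plug (C : ctx) (t : term) : term :=
  match C with
  | Hole => t
  | CAppL C u => App (plug C t) u
  | CEsL C u => Es (plug C t) u
  | CEsR s C => Es s (plug C t)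
  end.

Fixpoint ccomp (C C' : ctx) : ctx :=
  match C with
  | Hole => C'
  | CAppL C u => CAppL (ccomp C C') u
  | CEsL C u => CEsL (ccomp C C') u
  | CEsR s C => CEsR s (ccomp C C')
  end.

Fixpoint depth (C : ctx) : nat :=
  match C with
  | Hole => 0
  | CAppL C _ => depth C
  | CEsL C _ => S (depth C)
  | CEsR _ C => depth C
  end.

(* capture-avoiding plugging K<<t>> : t is given in the scope outside K *)
Definition cplug (C : ctx) (t : term) : term := plug C (lift (depth C) 0 t).

Inductive is_S : ctx -> Prop :=
| S_hole : is_S Hole
| S_es : forall S u, is_S S -> is_S (CEsL S u).

Inductive is_answer : term -> Prop :=
| ans_val : forall b, is_answer (Lam b)
| ans_es : forall a a', is_answer a -> is_answer a' -> is_answer (Es a a').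

Inductive is_N : ctx -> Prop :=
| N_hole : is_N Hole
| N_app : forall N t, is_N N -> is_N (CAppL N t)
| N_es : forall N t, is_N N -> is_N (CEsL N t).

Inductive is_A : ctx -> Prop :=
| A_hole : is_A Hole
| A_arg : forall a A, is_answer a -> is_A A -> is_A (CEsR a A)
| A_es : forall A t, is_A A -> is_A (CEsL A t).

Definition is_Y (C : ctx) : Prop :=
  exists A N, is_A A /\ is_N N /\ C = ccomp A N.

Inductive root_m : term -> term -> Prop :=
| rm : forall S b u, is_S S ->
    root_m (App (plug S (Lam b)) u) (plug S (Es b (lift (depth S) 0 u))).

Inductive root_e (P : ctx -> Prop) : term -> term -> Prop :=
| re : forall K u, P K ->
    root_e P (Es (cplug K (Var 0)) u) (Es (cplug K (lift 1 0 u)) u).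

Inductive root_gcv : term -> term -> Prop :=
| rgcv : forall t S v, is_S S -> is_value v -> free 0 t = false ->
    root_gcv (Es t (plug S v)) (plug S (lift (depth S) 0 (down 0 t))).

Inductive cclos (P : ctx -> Prop) (R : term -> term -> Prop) : term -> term -> Prop :=
| cc : forall C r r', P C -> R r r' -> cclos P R (plug C r) (plug C r').

Definition step_ym := cclos is_Y root_m.
Definition step_yeAY := cclos is_A (root_e is_Y).
Definition step_yeYN := cclos is_Y (root_e is_N).
Definition step_ygcv := cclos is_Y root_gcv.

Definition step_ynotgcv (t u : term) : Prop :=
  step_ym t u \/ step_yeAY t u \/ step_yeYN t u.

Definition step_y (t u : term) : Prop := step_ynotgcv t u \/ step_ygcv t u.

Fixpoint rel_pow (R : term -> term -> Prop) (n : nat) : term -> term -> Prop :=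
  match n with
  | 0 => fun t u => t = u
  | S n => fun t u => exists s, R t s /\ rel_pow R n s u
  end.

Inductive y_deriv : term -> term -> nat -> nat -> Prop :=
| yd_refl : forall t, y_deriv t t 0 0
| yd_notgcv : forall t s u k h,
    step_ynotgcv t s -> y_deriv s u k h -> y_deriv t u (S k) h
| yd_gcv : forall t s u k h,
    step_ygcv t s -> y_deriv s u k h -> y_deriv t u k (S h).

(* Main.v *)
Require Import Defs.
From Stdlib Require Import Arith Lia.

Definition up (f : nat -> nat) (n : nat) : nat :=
  match n with 0 => 0 | S n => S (f n) end.

Fixpoint ren (f : nat -> nat) (t : term) : term :=
  match t with
  | Var n => Var (f n)
  | Lam t => Lam (ren (up f) t)
  | App t u => App (ren f t) (ren f u)
  | Es t u => Es (ren (up f) t) (ren f u)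
  end.

Lemma ren_ext : forall t f g, (forall n, f n = g n) -> ren f t = ren g t.
Proof.
  induction t; simpl; intros f g H; f_equal; auto;
  try (apply IHt || apply IHt1); intros [|n]; simpl; auto.
Qed.

Lemma ren_comp : forall t f g, ren f (ren g t) = ren (fun n => f (g n)) t.
Proof.
  induction t; simpl; intros f g; f_equal; rewrite ?IHt, ?IHt1, ?IHt2; auto;
  apply ren_ext; intros [|n]; reflexivity.
Qed.

Lemma ren_fix : forall t f, (forall n, free n t = true -> f n = n) -> ren f t = t.
Proof.
  induction t; simpl; intros f H.
  - rewrite H; auto; apply Nat.eqb_refl.
  - f_equal. apply IHt. intros [|n] Hn; simpl; auto.
  - f_equal; [apply IHt1|apply IHt2]; intros n Hn; apply H; rewrite Hn; auto with bool.
  - f_equal; [apply IHt1|apply IHt2].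
    + intros [|n] Hn; simpl; auto. rewrite H; auto. simpl; rewrite Hn; auto.
    + intros n Hn; apply H; rewrite Hn; auto with bool.
Qed.

Lemma free_ren : forall t f n, free n (ren f t) = true -> exists m, f m = n /\ free m t = true.
Proof.
  induction t; simpl; intros f k H.
  - exists n. apply Nat.eqb_eq in H. split; auto. apply Nat.eqb_refl.
  - destruct (IHt _ _ H) as [[|m] [H1 H2]]; simpl in H1; try discriminate.
    injection H1; intro; subst. exists m; auto.
  - apply Bool.orb_true_iff in H as [H|H].
    + destruct (IHt1 _ _ H) as [m [H1 H2]]; exists m; rewrite H2; auto.
    + destruct (IHt2 _ _ H) as [m [H1 H2]]; exists m; rewrite H2; auto with bool.
  - apply Bool.orb_true_iff in H as [H|H].
    + destruct (IHt1 _ _ H) as [[|m] [H1 H2]]; simpl in H1; try discriminate.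
      injection H1; intro; subst. exists m; simpl; rewrite H2; auto.
    + destruct (IHt2 _ _ H) as [m [H1 H2]]; exists m; rewrite H2; auto with bool.
Qed.

Definition liftf d c n := if n <? c then n else n + d.
Definition downf c n := if n <=? c then n else n - 1.

Lemma lift_ren : forall t d c, lift d c t = ren (liftf d c) t.
Proof.
  induction t; simpl; intros d c.
  - unfold liftf; destruct (n <? c); auto.
  - f_equal; rewrite IHt; apply ren_ext; intros [|n]; unfold liftf; simpl; auto.
    change (S n <? S c) with (n <? c); destruct (n <? c); auto.
  - f_equal; auto.
  - f_equal; auto. rewrite IHt1; apply ren_ext; intros [|n]; unfold liftf; simpl; auto.
    change (S n <? S c) with (n <? c); destruct (n <? c); auto.
Qed.

Lemma down_ren : forall t c, down c t = ren (downf c) t.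
Proof.
  induction t; simpl; intros c.
  - unfold downf; destruct (n <=? c); auto.
  - f_equal; rewrite IHt; apply ren_ext; intros [|n]; unfold downf; simpl; auto.
    change (S n <=? S c) with (n <=? c); destruct (n <=? c) eqn:E; auto. apply Nat.leb_gt in E. lia.
  - f_equal; auto.
  - f_equal; auto. rewrite IHt1; apply ren_ext; intros [|n]; unfold downf; simpl; auto.
    change (S n <=? S c) with (n <=? c); destruct (n <=? c) eqn:E; auto. apply Nat.leb_gt in E. lia.
Qed.

Lemma liftf10 : forall n, liftf 1 0 n = S n.
Proof. intro n; unfold liftf; simpl; lia. Qed.

Lemma lift00 : forall t, lift 0 0 t = t.
Proof. intro t; rewrite lift_ren; apply ren_fix; intros n _; unfold liftf; simpl; lia. Qed.

Lemma lift_lift1 : forall d u, lift d 0 (lift 1 0 u) = lift (S d) 0 u.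
Proof.
  intros; rewrite !lift_ren, ren_comp; apply ren_ext; intro n; unfold liftf; simpl; lia.
Qed.

Lemma lift1_ren : forall f u, lift 1 0 (ren f u) = ren (up f) (lift 1 0 u).
Proof.
  intros; rewrite !lift_ren, !ren_comp; apply ren_ext; intro n; rewrite !liftf10; reflexivity.
Qed.

Lemma lift_down : forall t, free 0 t = false -> lift 1 0 (down 0 t) = t.
Proof.
  intros t H; rewrite lift_ren, down_ren, ren_comp; apply ren_fix.
  intros [|n] Hn; [congruence|]. unfold downf, liftf; simpl. lia.
Qed.

Lemma free_lift1 : forall w, free 0 (lift 1 0 w) = false.
Proof.
  intros w. destruct (free 0 (lift 1 0 w)) eqn:E; auto.
  rewrite lift_ren in E. apply free_ren in E as [m [H _]]. rewrite liftf10 in H. discriminate.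
Qed.

Lemma down_lift : forall w, down 0 (lift 1 0 w) = w.
Proof.
  intros; rewrite lift_ren, down_ren, ren_comp; apply ren_fix.
  intros n _; rewrite liftf10; unfold downf; simpl; lia.
Qed.

Lemma ans_ren : forall t f, is_answer t -> is_answer (ren f t).
Proof. intros t f H; revert f; induction H; intros; simpl; constructor; auto. Qed.

Lemma ans_ren_inv : forall f t, is_answer (ren f t) -> is_answer t.
Proof.
  intros f t H. remember (ren f t) as t' eqn:E. revert f t E.
  induction H; intros f t E; destruct t; simpl in E; try discriminate;
  injection E; intros; subst; constructor; eauto.
Qed.

Lemma ans_lift_inv : forall r, is_answer (lift 1 0 r) -> is_answer r.
Proof. intros r H; rewrite lift_ren in H; eapply ans_ren_inv; eauto. Qed.
Lemma ans_down_inv : forall r, is_answer (down 0 r) -> is_answer r.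
Proof. intros r H; rewrite down_ren in H; eapply ans_ren_inv; eauto. Qed.
Inductive mode := MY | MA | MN.

Inductive EV : mode -> nat -> term -> term -> term -> Prop :=
| ev_var : forall m n w, EV m n w (Var n) w
| ev_app : forall m n w t t' c, EV MN n w t t' -> EV m n w (App t c) (App t' c)
| ev_esl : forall m n w t t' c, EV m (S n) (lift 1 0 w) t t' -> EV m n w (Es t c) (Es t' c)
| ev_esr : forall n w a c c', is_answer a -> EV MY n w c c' -> EV MY n w (Es a c) (Es a c').

Inductive Cl (R : term -> term -> Prop) : mode -> term -> term -> Prop :=
| cl_base : forall m t t', R t t' -> Cl R m t t'
| cl_app : forall m t t' c, m <> MA -> Cl R MN t t' -> Cl R m (App t c) (App t' c)
| cl_esl : forall m t t' c, Cl R m t t' -> Cl R m (Es t c) (Es t' c)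
| cl_esr : forall m a c c', m <> MN -> is_answer a -> Cl R m c c' -> Cl R m (Es a c) (Es a c').

Inductive SG : term -> term -> term -> Prop :=
| sg_lam : forall r b, SG r (Lam b) r
| sg_es : forall r x y c, SG (lift 1 0 r) x y -> SG r (Es x c) (Es y c).

Inductive SM : term -> term -> term -> Prop :=
| sm_lam : forall u b, SM u (Lam b) (Es b u)
| sm_es : forall u x y c, SM (lift 1 0 u) x y -> SM u (Es x c) (Es y c).

Inductive Gr : term -> term -> Prop :=
| gr : forall t x s, free 0 t = false -> SG (down 0 t) x s -> Gr (Es t x) s.

Inductive Mr : term -> term -> Prop :=
| mr : forall u x y, SM u x y -> Mr (App x u) y.

Inductive Er (m : mode) : term -> term -> Prop :=
| er : forall t t' c, EV m 0 (lift 1 0 c) t t' -> Er m (Es t c) (Es t' c).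

Inductive kind := KM | KEY | KEN.
Definition XR k := match k with KM => Mr | KEY => Er MY | KEN => Er MN end.
Definition ok k mx := k = KEY -> mx = MA.

Lemma SM_ren : forall u x y, SM u x y -> forall f, SM (ren f u) (ren f x) (ren f y).
Proof.
  induction 1; intros f; simpl.
  - constructor.
  - constructor. rewrite lift1_ren. apply IHSM.
Qed.

Lemma EV_ren : forall m n w t y, EV m n w t y -> forall f, EV m (f n) (ren f w) (ren f t) (ren f y).
Proof.
  induction 1; intros f; simpl.
  - constructor.
  - constructor; auto.
  - constructor. rewrite lift1_ren. apply (IHEV (up f)).
  - constructor; auto. apply ans_ren; auto.
Qed.

Lemma XR_ren : forall k t t', XR k t t' -> forall f, XR k (ren f t) (ren f t').
Proof.
  intros k t t' H f; destruct k; simpl in *; destruct H; simpl.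
  - constructor. apply SM_ren; auto.
  - constructor. rewrite lift1_ren. apply (EV_ren _ _ _ _ _ H (up f)).
  - constructor. rewrite lift1_ren. apply (EV_ren _ _ _ _ _ H (up f)).
Qed.

Lemma Cl_ren : forall k m t t', Cl (XR k) m t t' -> forall f, Cl (XR k) m (ren f t) (ren f t').
Proof.
  induction 1; intros f; simpl.
  - constructor; apply XR_ren; auto.
  - apply cl_app; auto.
  - apply cl_esl; auto.
  - apply cl_esr; auto. apply ans_ren; auto.
Qed.

Ltac rinv H := match type of H with
  | _ = ren ?f ?t0 => destruct t0; simpl in H; try discriminate; injection H; intros; subst
  end.

Lemma SM_inv : forall u x y, SM u x y -> forall f x0 u0, x = ren f x0 -> u = ren f u0 ->
  exists y0, SM u0 x0 y0 /\ y = ren f y0.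
Proof.
  induction 1; intros f x0 u0 Ex Eu.
  - rinv Ex. exists (Es x0 u0); split; [constructor|reflexivity].
  - rinv Ex. destruct (IHSM (up f) x0_1 (lift 1 0 u0)) as [y0 [H1 H2]]; auto.
    + rewrite lift1_ren; reflexivity.
    + exists (Es y0 x0_2); split; [constructor; auto | simpl; congruence].
Qed.

Lemma EV_inv : forall m n' w' t y, EV m n' w' t y -> forall f t0 n w, t = ren f t0 -> f n = n' ->
  (forall k, f k = n' -> k = n) -> w' = ren f w -> exists y0, EV m n w t0 y0 /\ y = ren f y0.
Proof.
  induction 1; intros f t0 n0 w0 Et Fn Fu Ew.
  - rinv Et. rewrite (Fu n1) by auto. exists w0; split; [constructor|auto].
  - rinv Et. destruct (IHEV f t0_1 n0 w0) as [y0 [H1 H2]]; auto.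
    exists (App y0 t0_2); split; [constructor; auto|simpl; congruence].
  - rinv Et.
    assert (A2 : forall k, up f k = S (f n0) -> k = S n0).
    { intros [|k] Hk; simpl in Hk; try discriminate. injection Hk; intro; f_equal; auto. }
    destruct (IHEV (up f) t0_1 (S n0) (lift 1 0 w0) eq_refl eq_refl A2 (lift1_ren _ _)) as [y0 [H1 H2]].
    exists (Es y0 t0_2); split; [constructor; auto|simpl; congruence].
  - rinv Et. destruct (IHEV f t0_2 n0 w0) as [y0 [H1 H2]]; auto.
    exists (Es t0_1 y0); split; [constructor; auto; eapply ans_ren_inv; eauto|simpl; congruence].
Qed.

Lemma XR_inv : forall k f t0 w, XR k (ren f t0) w -> exists t', XR k t0 t' /\ w = ren f t'.
Proof.
  intros k f t0 w H; destruct k; simpl in *; remember (ren f t0) as T eqn:ET; destruct H.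
  - rinv ET. destruct (SM_inv _ _ _ H f t0_1 t0_2) as [y0 [H1 H2]]; auto.
    exists y0; split; auto; constructor; auto.
  - rinv ET. destruct (EV_inv _ _ _ _ _ H (up f) t0_1 0 (lift 1 0 t0_2)) as [y0 [H1 H2]]; auto.
    + intros [|k] Hk; simpl in Hk; auto; discriminate.
    + rewrite lift1_ren; reflexivity.
    + exists (Es y0 t0_2); split; [constructor; auto|simpl; congruence].
  - rinv ET. destruct (EV_inv _ _ _ _ _ H (up f) t0_1 0 (lift 1 0 t0_2)) as [y0 [H1 H2]]; auto.
    + intros [|k] Hk; simpl in Hk; auto; discriminate.
    + rewrite lift1_ren; reflexivity.
    + exists (Es y0 t0_2); split; [constructor; auto|simpl; congruence].
Qed.

Lemma Cl_inv : forall k m t w, Cl (XR k) m t w -> forall f t0, t = ren f t0 ->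
  exists t', Cl (XR k) m t0 t' /\ w = ren f t'.
Proof.
  induction 1; intros f t0 Et; subst.
  - destruct (XR_inv _ _ _ _ H) as [t1 [H1 H2]]. exists t1; split; auto; constructor; auto.
  - rinv Et. destruct (IHCl f t0_1) as [y0 [H1 H2]]; auto.
    exists (App y0 t0_2); split; [apply cl_app; auto|simpl; congruence].
  - rinv Et. destruct (IHCl (up f) t0_1) as [y0 [H1 H2]]; auto.
    exists (Es y0 t0_2); split; [apply cl_esl; auto|simpl; congruence].
  - rinv Et. destruct (IHCl f t0_2) as [y0 [H2 H3]]; auto.
    exists (Es t0_1 y0); split; [apply cl_esr; auto; eapply ans_ren_inv; eauto|simpl; congruence].
Qed.

Lemma lift_avoid : forall m n w t y, EV m n w t y -> forall k c r, t = lift k c r ->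
  n < c \/ c + k <= n.
Proof.
  induction 1; intros k c0 r E.
  - destruct r; simpl in E; try discriminate.
    destruct (n0 <? c0) eqn:L; injection E; intro; subst.
    + left; apply Nat.ltb_lt; auto.
    + right; apply Nat.ltb_ge in L; lia.
  - destruct r as [n0| | |]; simpl in E; try (destruct (n0 <? c0); discriminate); try discriminate; injection E; intros; subst. eauto.
  - destruct r as [n0| | |]; simpl in E; try (destruct (n0 <? c0); discriminate); try discriminate; injection E; intros; subst.
    destruct (IHEV k (S c0) r1 eq_refl); lia.
  - destruct r as [n0| | |]; simpl in E; try (destruct (n0 <? c0); discriminate); try discriminate; injection E; intros; subst. eauto.
Qed.

Lemma SG_ans : forall r x s, SG r x s -> is_answer s -> is_answer r /\ is_answer x.
Proof.
  induction 1; intros A.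
  - split; auto; constructor.
  - inversion A; subst. destruct (IHSG H2). split.
    + apply ans_lift_inv; auto.
    + constructor; auto.
Qed.

Lemma ans_noEV : forall a, is_answer a -> forall m n w y, EV m n w a y -> False.
Proof.
  induction 1; intros m n w y E; inversion E; subst; eauto.
Qed.

Lemma ans_noCl : forall a, is_answer a -> forall k m y, Cl (XR k) m a y -> False.
Proof.
  induction 1; intros k m y E; inversion E; subst; eauto.
  - destruct k; simpl in H; inversion H.
  - destruct k; simpl in H1; inversion H1; subst; eapply (ans_noEV a H); eauto.
Qed.

Lemma SG_EV : forall r x s, SG r x s -> forall m n w y, EV m n w s y ->
  (exists y', EV m n w r y' /\ SG y' x y) \/
  (is_answer r /\ m = MY /\ exists x', EV m n w x x' /\ SG r x' y).
Proof.
  induction 1; intros m n w y0 E.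
  - left; exists y0; split; auto; constructor.
  - inversion E; subst.
    + destruct (IHSG _ _ _ _ H6) as [[y' [H1 H2]] | [A [Em [x' [H1 H2]]]]].
      * left.
        assert (Hu : forall k, liftf 1 0 k = S n -> k = n)
          by (intros k Hk; rewrite liftf10 in Hk; congruence).
        destruct (EV_inv _ _ _ _ _ H1 (liftf 1 0) r n w (lift_ren _ _ _) (liftf10 n) Hu (lift_ren _ _ _)) as [y'' [H3 H4]].
        exists y''; split; auto. constructor. rewrite lift_ren, <- H4; auto.
      * right; split; [apply ans_lift_inv; auto|split; auto].
        exists (Es x' c); split; constructor; auto.
    + destruct (SG_ans _ _ _ H H5). right; split; [apply ans_lift_inv; auto|split; auto].
      exists (Es x c'); split; constructor; auto.
Qed.

Lemma lemC : forall k mx, ok k mx -> forall r x s, SG r x s -> forall u, Cl (XR k) mx s u ->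
  (is_answer r /\ mx <> MN /\ exists x', Cl (XR k) mx x x' /\ SG r x' u) \/
  (exists r', Cl (XR k) mx r r' /\ SG r' x u).
Proof.
  intros k mx Ok r x s H; induction H; intros u E.
  - right; exists u; split; auto; constructor.
  - inversion E; subst.
    + destruct k; simpl in H0; inversion H0; subst.
      * destruct (SG_EV _ _ _ H _ _ _ _ H4) as [[y' [H1 _]] | [A [Em [x' [H1 H2]]]]].
        -- destruct (lift_avoid _ _ _ _ _ H1 1 0 r eq_refl); lia.
        -- left; split; [apply ans_lift_inv; auto|]. rewrite (Ok eq_refl). split; [discriminate|].
           exists (Es x' c); split; [apply cl_base; constructor; auto | constructor; auto].
      * destruct (SG_EV _ _ _ H _ _ _ _ H4) as [[y' [H1 _]] | [A [Em [x' [H1 H2]]]]].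
        -- destruct (lift_avoid _ _ _ _ _ H1 1 0 r eq_refl); lia.
        -- discriminate.
    + destruct (IHSG _ H4) as [[A [Mx [x' [H1 H2]]]] | [r' [H1 H2]]].
      * left; split; [apply ans_lift_inv; auto|split; auto].
        exists (Es x' c); split; [apply cl_esl; auto|constructor; auto].
      * rewrite lift_ren in H1. destruct (Cl_inv _ _ _ _ H1 (liftf 1 0) r eq_refl) as [r'' [H3 H6]].
        right; exists r''; split; auto. constructor. rewrite lift_ren, <- H6; auto.
    + destruct (SG_ans _ _ _ H H4). left; split; [apply ans_lift_inv; auto|split; auto].
      exists (Es x c'); split; [apply cl_esr; auto|constructor; auto].
Qed.

Lemma SG_SM : forall r x s, SG r x s -> forall c u, SM c s u -> exists w, SM c r w /\ SG w x u.
Proof.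
  induction 1; intros c0 u E.
  - exists u; split; auto; constructor.
  - inversion E; subst. destruct (IHSG _ _ H4) as [w1 [H1 H2]].
    rewrite (lift_ren r), (lift_ren c0) in H1.
    destruct (SM_inv _ _ _ H1 (liftf 1 0) r c0 eq_refl eq_refl) as [w [H3 H5]].
    exists w; split; auto. constructor. rewrite lift_ren, <- H5; auto.
Qed.

Lemma lemD : forall m t1 s1, Cl Gr m t1 s1 -> m = MN -> forall c u, SM c s1 u ->
  forall mg, exists u', SM c t1 u' /\ Cl Gr mg u' u.
Proof.
  induction 1; intros Em c0 u E mg; subst.
  - destruct H. destruct (SG_SM _ _ _ H0 _ _ E) as [w [H1 H2]].
    exists (Es (lift 1 0 w) x); split.
    + constructor. rewrite <- (lift_down _ H). rewrite !lift_ren. apply SM_ren; auto.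
    + apply cl_base; constructor. apply free_lift1. rewrite down_lift; auto.
  - inversion E.
  - inversion E; subst. destruct (IHCl eq_refl _ _ H4 mg) as [u' [H1 H2]].
    exists (Es u' c); split; [constructor; auto|apply cl_esl; auto].
  - congruence.
Qed.

Lemma lemG : forall m t s, Cl Gr m t s -> is_answer s -> is_answer t.
Proof.
  induction 1; intros A.
  - destruct H. destruct (SG_ans _ _ _ H0 A). constructor; auto. apply ans_down_inv; auto.
  - inversion A.
  - inversion A; subst; constructor; auto.
  - inversion A; subst; constructor; auto.
Qed.

Lemma lemF : forall mg t1 s1, Cl Gr mg t1 s1 -> forall m n w y, EV m n w s1 y ->
  exists y0, EV m n w t1 y0 /\ Cl Gr mg y0 y.
Proof.
  induction 1; intros m0 n w y E.
  - destruct H. destruct (SG_EV _ _ _ H0 _ _ _ _ E) as [[y' [H1 H2]] | [A [Em [x' [H1 H2]]]]].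
    + exists (Es (lift 1 0 y') x); split.
      * constructor. rewrite <- (lift_down _ H). rewrite !lift_ren.
        rewrite <- (liftf10 n). apply EV_ren; auto.
      * apply cl_base; constructor. apply free_lift1. rewrite down_lift; auto.
    + subst. exists (Es t x'); split.
      * constructor; auto. apply ans_down_inv; auto.
      * apply cl_base; constructor; auto.
  - inversion E; subst. edestruct IHCl as [y0 [H1 H2]]; [eassumption|].
    exists (App y0 c); split; [constructor; auto|apply cl_app; auto].
  - inversion E; subst.
    + edestruct IHCl as [y0 [H1 H2]]; [eassumption|].
      exists (Es y0 c); split; [constructor; auto|apply cl_esl; auto].
    + exists (Es t c'); split; [constructor; auto; eapply lemG; eauto|apply cl_esl; auto].
  - inversion E; subst.
    + exfalso; eapply (ans_noEV a H0); eauto.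
    + edestruct IHCl as [y0 [Hy1 Hy2]]; [eassumption|].
      exists (Es a y0); split; [constructor; auto|apply cl_esr; auto].
Qed.

Lemma swap : forall mg t s, Cl Gr mg t s -> forall k mx u, ok k mx -> Cl (XR k) mx s u ->
  exists s', Cl (XR k) mx t s' /\ Cl Gr mg s' u.
Proof.
  induction 1; intros k mx u Ok E.
  - destruct H. destruct (lemC _ _ Ok _ _ _ H0 _ E) as [[A [Mx [x' [H1 H2]]]] | [r' [H1 H2]]].
    + exists (Es t x'); split.
      * apply cl_esr; auto. apply ans_down_inv; auto.
      * apply cl_base; constructor; auto.
    + exists (Es (lift 1 0 r') x); split.
      * apply cl_esl. rewrite <- (lift_down _ H). rewrite !lift_ren. apply Cl_ren; auto.
      * apply cl_base; constructor. apply free_lift1. rewrite down_lift; auto.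
  - inversion E; subst.
    + destruct k; simpl in H1; inversion H1; subst.
      destruct (lemD _ _ _ H0 eq_refl _ _ H5 m) as [u' [H6 H7]].
      exists u'; split; auto. apply cl_base; simpl; constructor; auto.
    + assert (Ok' : ok k MN) by (intro Hk; rewrite (Ok Hk) in H4; congruence).
      destruct (IHCl _ _ _ Ok' ltac:(eassumption)) as [s' [H1 H2]].
      exists (App s' c); split; [apply cl_app; auto|apply cl_app; auto].
  - inversion E; subst.
    + destruct k; simpl in H0; inversion H0; subst;
      destruct (lemF _ _ _ H _ _ _ _ ltac:(eassumption)) as [y0 [Hy1 Hy2]];
      exists (Es y0 c); (split; [apply cl_base; simpl; constructor; auto|apply cl_esl; auto]).
    + destruct (IHCl _ _ _ Ok ltac:(eassumption)) as [s' [H1 H2]].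
      exists (Es s' c); split; [apply cl_esl; auto|apply cl_esl; auto].
    + exists (Es t c'); split; [apply cl_esr; auto; eapply lemG; eauto|apply cl_esl; auto].
  - inversion E; subst.
    + destruct k; simpl in H2; inversion H2; subst; exfalso; eapply ans_noEV; eauto.
    + exfalso; eapply ans_noCl; eauto.
    + destruct (IHCl _ _ _ Ok ltac:(eassumption)) as [s' [Hs1 Hs2]].
      exists (Es a s'); split; [apply cl_esr; auto|apply cl_esr; auto].
Qed.

Lemma plug_ccomp : forall A N t, plug (ccomp A N) t = plug A (plug N t).
Proof. induction A; simpl; intros; f_equal; auto. Qed.

Lemma Cl_mono : forall (R R' : term -> term -> Prop), (forall a b, R a b -> R' a b) ->
  forall m t u, Cl R m t u -> Cl R' m t u.
Proof.
  intros R R' HR m t u H; induction H.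
  - apply cl_base; auto.
  - apply cl_app; auto.
  - apply cl_esl; auto.
  - apply cl_esr; auto.
Qed.

Lemma Cl_toY : forall R m t u, Cl R m t u -> Cl R MY t u.
Proof.
  induction 1.
  - apply cl_base; auto.
  - apply cl_app; auto; discriminate.
  - apply cl_esl; auto.
  - apply cl_esr; auto; discriminate.
Qed.

Lemma N_Cl : forall N, is_N N -> forall (R : term -> term -> Prop) m r r', m <> MA -> R r r' ->
  Cl R m (plug N r) (plug N r').
Proof.
  induction 1; intros R m r r' Hm HR; simpl.
  - apply cl_base; auto.
  - apply cl_app; auto. apply IHis_N; auto; discriminate.
  - apply cl_esl; auto.
Qed.

Lemma A_Cl : forall A, is_A A -> forall (R : term -> term -> Prop) m x x', m <> MN ->
  Cl R m x x' -> Cl R m (plug A x) (plug A x').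
Proof.
  induction 1; intros R m x x' Hm HR; simpl; auto.
  - apply cl_esr; auto.
  - apply cl_esl; auto.
Qed.

Lemma cclosY_Cl : forall R t u, cclos is_Y R t u -> Cl R MY t u.
Proof.
  intros R t u H; destruct H as [C r r' [A [N [HA [HN E]]]] HR]; subst.
  rewrite !plug_ccomp. apply A_Cl; auto; try discriminate.
  apply N_Cl; auto; discriminate.
Qed.

Lemma cclosA_Cl : forall R t u, cclos is_A R t u -> Cl R MA t u.
Proof.
  intros R t u H; destruct H as [C r r' HA HR].
  apply A_Cl; auto; try discriminate. apply cl_base; auto.
Qed.

Definition ctx_ok m := match m with MY => is_Y | MA => is_A | MN => is_N end.

Lemma Cl_cclos : forall R m t u, Cl R m t u ->
  exists C r r', ctx_ok m C /\ R r r' /\ t = plug C r /\ u = plug C r'.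
Proof.
  induction 1.
  - exists Hole, t, t'; repeat split; auto.
    destruct m; simpl; [exists Hole, Hole; repeat split; constructor|constructor|constructor].
  - destruct IHCl as [C [r [r' [HC [HR [E1 E2]]]]]]; subst.
    exists (CAppL C c), r, r'; repeat split; auto.
    destruct m; simpl in *; try congruence.
    + exists Hole, (CAppL C c); repeat split; auto; constructor; auto.
    + constructor; auto.
  - destruct IHCl as [C [r [r' [HC [HR [E1 E2]]]]]]; subst.
    exists (CEsL C c), r, r'; repeat split; auto.
    destruct m; simpl in *.
    + destruct HC as [A [N [HA [HN E]]]]; subst. exists (CEsL A c), N; repeat split; auto.
      constructor; auto.
    + constructor; auto.
    + constructor; auto.
  - destruct IHCl as [C [r [r' [HC [HR [E1 E2]]]]]]; subst.
    exists (CEsR a C), r, r'; repeat split; auto.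
    destruct m; simpl in *; try congruence.
    + destruct HC as [A [N [HA [HN E]]]]; subst. exists (CEsR a A), N; repeat split; auto.
      constructor; auto.
    + constructor; auto.
Qed.

Lemma Cl_cclosY : forall R t u, Cl R MY t u -> cclos is_Y R t u.
Proof.
  intros R t u H. destruct (Cl_cclos _ _ _ _ H) as [C [r [r' [HC [HR [E1 E2]]]]]]; subst.
  constructor; auto.
Qed.

Lemma Cl_cclosA : forall R t u, Cl R MA t u -> cclos is_A R t u.
Proof.
  intros R t u H. destruct (Cl_cclos _ _ _ _ H) as [C [r [r' [HC [HR [E1 E2]]]]]]; subst.
  constructor; auto.
Qed.

Lemma SM_plug : forall S, is_S S -> forall b u,
  SM u (plug S (Lam b)) (plug S (Es b (lift (depth S) 0 u))).
Proof.
  induction 1; intros b0 u0; simpl.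
  - rewrite lift00; constructor.
  - constructor. rewrite <- (lift_lift1 (depth S)). apply IHis_S.
Qed.

Lemma SM_unplug : forall u x y, SM u x y ->
  exists S b, is_S S /\ x = plug S (Lam b) /\ y = plug S (Es b (lift (depth S) 0 u)).
Proof.
  induction 1.
  - exists Hole, b; simpl; rewrite lift00; repeat split; constructor.
  - destruct IHSM as [S [b [HS [E1 E2]]]]; subst.
    exists (CEsL S c), b; simpl; rewrite <- (lift_lift1 (depth S)); repeat split; auto; constructor; auto.
Qed.

Lemma rootm_Mr : forall t u, root_m t u -> Mr t u.
Proof. intros t u H; destruct H; constructor; apply SM_plug; auto. Qed.

Lemma Mr_rootm : forall t u, Mr t u -> root_m t u.
Proof.
  intros t u H; destruct H. destruct (SM_unplug _ _ _ H) as [S [b [HS [E1 E2]]]]; subst.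
  constructor; auto.
Qed.

Lemma SG_plug : forall S, is_S S -> forall b r,
  SG r (plug S (Lam b)) (plug S (lift (depth S) 0 r)).
Proof.
  induction 1; intros b0 r; simpl.
  - rewrite lift00; constructor.
  - constructor. rewrite <- (lift_lift1 (depth S)). apply IHis_S.
Qed.

Lemma SG_unplug : forall r x y, SG r x y ->
  exists S b, is_S S /\ x = plug S (Lam b) /\ y = plug S (lift (depth S) 0 r).
Proof.
  induction 1.
  - exists Hole, b; simpl; rewrite lift00; repeat split; constructor.
  - destruct IHSG as [S [b [HS [E1 E2]]]]; subst.
    exists (CEsL S c), b; simpl; rewrite <- (lift_lift1 (depth S)); repeat split; auto; constructor; auto.
Qed.

Lemma rootgcv_Gr : forall t u, root_gcv t u -> Gr t u.
Proof.
  intros t u H; destruct H as [t S v HS [b Hv] Hf]; subst.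
  constructor; auto. apply SG_plug; auto.
Qed.

Lemma Gr_rootgcv : forall t u, Gr t u -> root_gcv t u.
Proof.
  intros t u H; destruct H. destruct (SG_unplug _ _ _ H0) as [S [b [HS [E1 E2]]]]; subst.
  constructor; auto. exists b; auto.
Qed.

Lemma N_EV : forall K, is_N K -> forall m n w,
  EV m n w (plug K (Var (n + depth K))) (plug K (lift (depth K) 0 w)).
Proof.
  induction 1; intros m n w; simpl.
  - rewrite Nat.add_0_r, lift00; constructor.
  - apply ev_app; auto.
  - apply ev_esl. rewrite Nat.add_succ_r, <- (lift_lift1 (depth N)). apply IHis_N.
Qed.

Lemma Y_EV : forall A, is_A A -> forall N, is_N N -> forall n w,
  EV MY n w (plug (ccomp A N) (Var (n + depth (ccomp A N))))
            (plug (ccomp A N) (lift (depth (ccomp A N)) 0 w)).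
Proof.
  induction 1; intros N HN n w; simpl.
  - apply N_EV; auto.
  - apply ev_esr; auto.
  - apply ev_esl. rewrite Nat.add_succ_r, <- (lift_lift1 (depth (ccomp A N))). apply IHis_A; auto.
Qed.

Definition okm m := match m with MN => is_N | _ => is_Y end.

Lemma EV_unplug : forall m n w t y, EV m n w t y ->
  exists K, okm m K /\ t = plug K (Var (n + depth K)) /\ y = plug K (lift (depth K) 0 w).
Proof.
  induction 1.
  - exists Hole; simpl; rewrite Nat.add_0_r, lift00; repeat split; auto.
    destruct m; simpl; try constructor; exists Hole, Hole; repeat split; constructor.
  - destruct IHEV as [K [HK [E1 E2]]]; subst. exists (CAppL K c); simpl; repeat split; auto.
    simpl in HK. destruct m; simpl; try (constructor; auto);
    exists Hole, (CAppL K c); repeat split; constructor; auto.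
  - destruct IHEV as [K [HK [E1 E2]]]; subst. exists (CEsL K c); simpl.
    rewrite Nat.add_succ_r, <- (lift_lift1 (depth K)). repeat split; auto.
    destruct m; simpl in *; try (constructor; auto);
    destruct HK as [A [N [HA [HN E]]]]; subst; exists (CEsL A c), N; repeat split; auto;
    constructor; auto.
  - destruct IHEV as [K [HK [E1 E2]]]; subst. exists (CEsR a K); simpl; repeat split; auto.
    simpl in HK. destruct HK as [A [N [HA [HN E]]]]; subst; exists (CEsR a A), N; repeat split; auto;
    constructor; auto.
Qed.

Lemma roote_Er : forall m t u, root_e (okm m) t u -> m <> MA -> Er m t u.
Proof.
  intros m t u H Hm; destruct H as [K u0 HK]. constructor. unfold cplug.
  replace (lift (depth K) 0 (Var 0)) with (Var (0 + depth K)) by reflexivity.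
  destruct m; simpl in HK; try congruence.
  - destruct HK as [A [N [HA [HN E]]]]; subst. apply Y_EV; auto.
  - apply N_EV; auto.
Qed.

Lemma Er_roote : forall m t u, Er m t u -> root_e (okm m) t u.
Proof.
  intros m t u H; destruct H. destruct (EV_unplug _ _ _ _ _ H) as [K [HK [E1 E2]]]; subst.
  exact (re (okm m) K c HK).
Qed.

Lemma ngcv_to : forall t u, step_ynotgcv t u -> exists k mx, ok k mx /\ Cl (XR k) mx t u.
Proof.
  intros t u [H|[H|H]].
  - exists KM, MY; split; [intro; discriminate|].
    apply cclosY_Cl in H. simpl. eapply Cl_mono; [|exact H]. apply rootm_Mr.
  - exists KEY, MA; split; [intro; reflexivity|].
    apply cclosA_Cl in H. simpl. eapply Cl_mono; [|exact H].
    intros a b Hab; apply roote_Er; [exact Hab|discriminate].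
  - exists KEN, MY; split; [intro; discriminate|].
    apply cclosY_Cl in H. simpl. eapply Cl_mono; [|exact H].
    intros a b Hab; apply roote_Er; [exact Hab|discriminate].
Qed.

Lemma ngcv_from : forall k mx t u, ok k mx -> Cl (XR k) mx t u -> step_ynotgcv t u.
Proof.
  intros k mx t u Ok H. destruct k; simpl in H.
  - left. apply Cl_cclosY. apply Cl_toY in H. eapply Cl_mono; [|exact H]. apply Mr_rootm.
  - right; left. rewrite (Ok eq_refl) in H. apply Cl_cclosA.
    eapply Cl_mono; [|exact H]. intros a b Hab; apply (Er_roote MY); auto.
  - right; right. apply Cl_cclosY. apply Cl_toY in H. eapply Cl_mono; [|exact H].
    intros a b Hab; apply (Er_roote MN); auto.
Qed.

Lemma gcv_to : forall t u, step_ygcv t u -> Cl Gr MY t u.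
Proof. intros t u H; apply cclosY_Cl in H; eapply Cl_mono; [|exact H]; apply rootgcv_Gr. Qed.

Lemma gcv_from : forall t u, Cl Gr MY t u -> step_ygcv t u.
Proof. intros t u H; apply Cl_cclosY; eapply Cl_mono; [|exact H]; apply Gr_rootgcv. Qed.

Lemma push : forall k t s w, Cl Gr MY t s -> rel_pow step_ynotgcv k s w ->
  exists t', rel_pow step_ynotgcv k t t' /\ step_ygcv t' w.
Proof.
  induction k; simpl; intros t s w H P.
  - subst. exists t; split; auto. apply gcv_from; auto.
  - destruct P as [s1 [H1 H2]]. destruct (ngcv_to _ _ H1) as [kk [mx [Ok H3]]].
    destruct (swap _ _ _ H _ _ _ Ok H3) as [s' [H4 H5]].
    destruct (IHk _ _ _ H5 H2) as [t'' [H6 H7]].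
    exists t''; split; auto. exists s'; split; auto. eapply ngcv_from; eauto.
Qed.

Theorem proposition11p6 (t u : term) (k h : nat) :
  y_deriv t u k h ->
  exists s, rel_pow step_ynotgcv k t s /\ rel_pow step_ygcv h s u.
Proof.
  induction 1.
  - exists t; simpl; auto.
  - destruct IHy_deriv as [s0 [H1 H2]]. exists s0; split; auto. simpl; exists s; auto.
  - destruct IHy_deriv as [s0 [H1 H2]].
    destruct (push _ _ _ _ (gcv_to _ _ H) H1) as [t' [H3 H4]].
    exists t'; split; auto. simpl; exists s0; auto.
Qed.
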